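(* For finite $n\geq2$, the class of completely representable algebras in $TA_n$ is elementary; indeed it is axiomatized by a finite set of first-order sentences (namely $\Sigma_n$ together with the sentence expressing atomicity of the Boolean reduct), and it coincides with the class of atomic members of $TA_n$.
   Context: $TA_n=\mathbf{Mod}(\Sigma_n)$, where $\Sigma_n$ is a finite set of equations consisting of the Boolean algebra axioms, the equations saying each $s_{ij}$ ($i\neq j<n$) is a Boolean endomorphism, and equations $t_1(x)=t_2(x)$ for words $t_1,t_2$ in the $s_{ij}$ whose associated compositions of transpositions coincide in $S_n$ (finitely many suffice). A complete representation of $\mathfrak A$ is an injective homomorphism $f:\mathfrak A\to\wp(V)$, $V$ permutable (closed under $s\mapsto s\circ[i,j]$), with $f(\prod Y)=\bigcap f[Y]$ whenever $\prod Y$ exists; here $\wp(V)=\langle\mathcal P(V);\cap,-,S_{ij}\rangle$, $S_{ij}(Y)=\{q\in V:q\circ[i,j]\in Y\}$. *)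

(* Defs.v *)
From mathcomp Require Import all_boot all_order all_fingroup.
From Stdlib Require List.
Set Implicit Arguments. Unset Strict Implicit. Unset Printing Implicit Defensive.

Record tstruct (n : nat) := TStruct {
  carrier :> Type;
  tmeet : carrier -> carrier -> carrier;
  tcompl : carrier -> carrier;
  tsub : 'I_n -> 'I_n -> carrier -> carrier }.

Section TA.
Variables (n : nat) (A : tstruct n).
Local Notation "x * y" := (tmeet x y).
Local Notation "- x" := (tcompl x).

Definition tjoin (x y : A) : A := - (- x * - y).
Local Notation "x + y" := (tjoin x y).

(* Boolean algebra axioms in the signature (.,-) (a complete, partly redundant, list) *)
Definition boolean_axioms : Prop :=
  (forall x y : A, x * y = y * x) /\
  (forall x y z : A, x * (y * z) = (x * y) * z) /\
  (forall x : A, x * x = x) /\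
  (forall x y : A, x + y = y + x) /\
  (forall x y z : A, x + (y + z) = (x + y) + z) /\
  (forall x y : A, x * (x + y) = x) /\
  (forall x y : A, x + (x * y) = x) /\
  (forall x y z : A, x * (y + z) = (x * y) + (x * z)) /\
  (forall x : A, - - x = x) /\
  (forall x y : A, x * - x = y * - y).

Definition sub_endo : Prop :=
  forall i j : 'I_n, i != j ->
    (forall x y : A, tsub i j (x * y) = tsub i j x * tsub i j y) /\
    (forall x : A, tsub i j (- x) = - tsub i j x).

Definition word := seq ('I_n * 'I_n).
Definition word_ok (w : word) : bool := all (fun p => p.1 != p.2) w.
Definition word_act (w : word) (x : A) : A := foldr (fun p y => tsub p.1 p.2 y) x w.
Definition word_perm (w : word) : {perm 'I_n} :=
  foldr (fun p (acc : {perm 'I_n}) => (tperm p.1 p.2 * acc)%g) 1%g w.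

Definition perm_equations : Prop :=
  forall w1 w2 : word, word_ok w1 -> word_ok w2 -> word_perm w1 = word_perm w2 ->
    forall x : A, word_act w1 x = word_act w2 x.

(* membership in TA_n = Mod(Sigma_n) *)
Definition in_TA : Prop := [/\ boolean_axioms, sub_endo & perm_equations].

Definition tle (x y : A) : Prop := x * y = x.
Definition is_zero (x : A) : Prop := x = x * - x.
Definition is_atom (a : A) : Prop :=
  ~ is_zero a /\ forall b, tle b a -> b = a \/ is_zero b.
Definition atomic : Prop :=
  forall x : A, ~ is_zero x -> exists a, is_atom a /\ tle a x.

Definition is_inf (Y : A -> Prop) (a : A) : Prop :=
  (forall y, Y y -> tle a y) /\ (forall b, (forall y, Y y -> tle b y) -> tle b a).

(* complete representation into wp(V), V a permutable set of n-ary sequences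
   over a base set U; subsets of V are predicates contained in V. *)
Definition complete_rep_into (U : Type) (V : ('I_n -> U) -> Prop)
    (f : A -> ('I_n -> U) -> Prop) : Prop :=
  (forall q i j, V q -> V (fun k => q (tperm i j k))) /\
      (forall x q, f x q -> V q) /\
      (forall x y, (forall q, f x q <-> f y q) -> x = y) /\
      (forall x y q, f (x * y) q <-> (f x q /\ f y q)) /\
      (forall x q, f (- x) q <-> (V q /\ ~ f x q)) /\
      (forall i j x q, i != j ->
          (f (tsub i j x) q <-> (V q /\ f x (fun k => q (tperm i j k))))) /\
      (forall (Y : A -> Prop) (a : A), is_inf Y a ->
          forall q, f a q <-> (V q /\ forall y, Y y -> f y q)).

Definition completely_representable : Prop :=
  exists (U : Type) (V : ('I_n -> U) -> Prop) (f : A -> ('I_n -> U) -> Prop),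
    complete_rep_into V f.
End TA.

Inductive term (n : nat) :=
  | TVar of nat
  | TMeet of term n & term n
  | TCompl of term n
  | TSub of 'I_n & 'I_n & term n.

Inductive formula (n : nat) :=
  | FEq of term n & term n
  | FNot of formula n
  | FAnd of formula n & formula n
  | FForall of nat & formula n.

Fixpoint term_vars n (t : term n) : seq nat :=
  match t with
  | TVar k => [:: k]
  | TMeet t1 t2 => term_vars t1 ++ term_vars t2
  | TCompl t1 => term_vars t1
  | TSub _ _ t1 => term_vars t1
  end.

Fixpoint free_vars n (phi : formula n) : seq nat :=
  match phi with
  | FEq t1 t2 => term_vars t1 ++ term_vars t2
  | FNot p => free_vars p
  | FAnd p1 p2 => free_vars p1 ++ free_vars p2
  | FForall k p => filter (fun m => m != k) (free_vars p)
  end.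

Definition sentence n (phi : formula n) : bool := nilp (free_vars phi).

Fixpoint teval n (A : tstruct n) (rho : nat -> A) (t : term n) : A :=
  match t with
  | TVar k => rho k
  | TMeet t1 t2 => tmeet (teval rho t1) (teval rho t2)
  | TCompl t1 => tcompl (teval rho t1)
  | TSub i j t1 => tsub i j (teval rho t1)
  end.

Fixpoint sat n (A : tstruct n) (rho : nat -> A) (phi : formula n) : Prop :=
  match phi with
  | FEq t1 t2 => teval rho t1 = teval rho t2
  | FNot p => ~ sat rho p
  | FAnd p1 p2 => sat rho p1 /\ sat rho p2
  | FForall k p => forall a : A, sat (fun m => if m == k then a else rho m) p
  end.

Definition models n (Gamma : seq (formula n)) (A : tstruct n) : Prop :=
  forall phi, Stdlib.Lists.List.In phi Gamma -> forall rho : nat -> A, sat rho phi.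

(* Main.v *)
Require Import Defs.
From mathcomp Require Import all_boot all_order all_fingroup.
From Stdlib Require Import Classical.
Set Implicit Arguments. Unset Strict Implicit. Unset Printing Implicit Defensive.

Local Notation mt := tmeet.
Local Notation cp := tcompl.

Ltac bax HB := let C := fresh "C" in let As := fresh "As" in let I := fresh "I" in
  let JC := fresh "JC" in let JA := fresh "JA" in let Ab1 := fresh "Ab1" in
  let Ab2 := fresh "Ab2" in let D := fresh "D" in let N := fresh "N" in let Z := fresh "Z" in
  case: HB => C [As [I [JC [JA [Ab1 [Ab2 [D [N Z]]]]]]]].

Section BA.
Context (n : nat) (A : tstruct n) (HB : boolean_axioms A).

Lemma le_trans (a b c : A) : tle a b -> tle b c -> tle a c.
Proof. bax HB; rewrite /tle => h1 h2. by rewrite -{1}h1 -As h2. Qed.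

Lemma le_antisym (a b : A) : tle a b -> tle b a -> a = b.
Proof. bax HB; rewrite /tle => h1 h2. by rewrite -h1 C h2. Qed.

Lemma meet_le_l (x y : A) : tle (mt x y) x.
Proof. bax HB; rewrite /tle. by rewrite (C x y) -As I. Qed.

Lemma meet_le_r (x y : A) : tle (mt x y) y.
Proof. bax HB; rewrite /tle. by rewrite -As I. Qed.

Lemma le_meet (b x y : A) : tle b (mt x y) <-> tle b x /\ tle b y.
Proof.
split.
- move=> h; split; apply: le_trans h _; [exact: meet_le_l| exact: meet_le_r].
- bax HB; rewrite /tle => -[h1 h2]. by rewrite As h1 h2.
Qed.

Lemma zero_eq (z w : A) : is_zero z -> is_zero w -> z = w.
Proof. bax HB; rewrite /is_zero => h1 h2; rewrite h1 h2; exact: Z. Qed.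

Lemma zero_mc (x : A) : is_zero (mt x (cp x)).
Proof. bax HB; rewrite /is_zero. exact: Z. Qed.

Lemma le_zero (a z : A) : tle a z -> is_zero z -> is_zero a.
Proof.
move=> h hz. have e := zero_eq hz (zero_mc a).
move: h; rewrite /tle e. bax HB => h.
rewrite /is_zero. rewrite -{1}h As I. done.
Qed.

Lemma key (x y : A) : is_zero (mt x (cp y)) -> tle x y.
Proof.
move=> hz. have e := zero_eq hz (zero_mc (mt x y)).
bax HB. rewrite /tle.
have h1 : x = mt x (tjoin y (cp y)).
  rewrite -{1}(Ab1 x (cp x)) /tjoin. by rewrite (Z (cp x) (cp y)).
by rewrite {2}h1 D e Ab2.
Qed.

Lemma atom_compl (b x : A) : is_atom b -> (tle b (cp x) <-> ~ tle b x).
Proof.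
move=> [nz hb]; split.
- move=> h1 h2. apply: nz. apply: (le_zero (z := mt x (cp x))); last exact: zero_mc.
  by apply/le_meet.
- move=> h. case: (hb (mt b x) (meet_le_l b x)) => [e|hz]; first by [].
  apply: key. bax HB. by rewrite N.
Qed.

Lemma zero_le (a z : A) : is_zero z -> tle z a.
Proof.
move=> hz. apply: key. apply: (le_zero (z := z)) => //. exact: meet_le_l.
Qed.
End BA.

Section Sub.
Context (n : nat) (A : tstruct n) (HB : boolean_axioms A) (HS : sub_endo A)
  (HP : perm_equations A).

Lemma ss (i j : 'I_n) (x : A) : i != j -> tsub i j (tsub i j x) = x.
Proof.
move=> ij. have := HP (w1 := [:: (i,j); (i,j)]) (w2 := [::]).
rewrite /word_ok /= ij => /(_ isT isT). rewrite mulg1 tperm2 => /(_ erefl x). done.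
Qed.

Lemma sub_adj (i j : 'I_n) (b x : A) : i != j -> (tle b (tsub i j x) <-> tle (tsub i j b) x).
Proof.
move=> ij; have [hm hc] := HS ij; rewrite /tle; split => h.
- by rewrite -{2}h hm (ss _ ij).
- by rewrite -{1}(ss b ij) -hm h (ss _ ij).
Qed.

Lemma sub_zero (i j : 'I_n) (z : A) : i != j -> is_zero z -> is_zero (tsub i j z).
Proof. move=> ij; have [hm hc] := HS ij; rewrite /is_zero => h. by rewrite {1}h hm hc. Qed.

Lemma sub_atom (i j : 'I_n) (a : A) : i != j -> is_atom a -> is_atom (tsub i j a).
Proof.
move=> ij [nz ha]; split.
- move=> hz; apply: nz; rewrite -(ss a ij); exact: sub_zero.
- move=> b /(sub_adj _ _ ij) /ha [e|hz].
  + by left; rewrite -e ss.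
  + by right; rewrite -(ss b ij); apply: sub_zero.
Qed.

Lemma act_atom (w : word n) (a : A) : word_ok w -> is_atom a -> is_atom (word_act w a).
Proof.
elim: w => [//|[i j] w IH] /= /andP[ij ok] ha.
apply: sub_atom => //; exact: IH.
Qed.
End Sub.

Section Rep.
Context (n : nat) (hn : 0 < n) (A : tstruct n) (HB : boolean_axioms A) (HS : sub_endo A)
  (HP : perm_equations A) (HAt : atomic A).

Definition rep (a : A) (w : word n) (q : 'I_n -> A * 'I_n) := forall k, q k = (a, word_perm w k).
Definition RV q := exists a w, [/\ is_atom a, word_ok w & rep a w q].
Definition RF x q := exists a w, [/\ is_atom a, word_ok w, rep a w q & tle (word_act w a) x].

Lemma WD a w a' w' q : rep a w q -> rep a' w' q -> word_ok w -> word_ok w' ->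
  word_act w a = word_act w' a'.
Proof.
move=> h h' ok ok'. pose k0 : 'I_n := Ordinal hn.
have := h k0; rewrite h' => -[ea _]; subst a'.
apply: HP => //. apply/permP => k. by move: (h k); rewrite h' => -[].
Qed.

Lemma RF_char a w q x : is_atom a -> rep a w q -> word_ok w -> (RF x q <-> tle (word_act w a) x).
Proof.
move=> ha h ok; split.
- move=> [a' [w' [_ ok' h' le]]]. by rewrite (WD h h' ok ok').
- move=> le. by exists a, w.
Qed.

Lemma RF_V x q : RF x q -> RV q.
Proof. by move=> [a [w [? ? ? _]]]; exists a, w. Qed.

Lemma le_of_RF x y : (forall q, RF x q -> RF y q) -> tle x y.
Proof.
move=> H. apply: key => //. apply: NNPP => nz.
have [a [ha le]] := HAt nz.
pose q0 := fun k : 'I_n => (a, k).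
have r0 : rep a [::] q0 by move=> k; rewrite /q0 /= perm1.
have [lx ly] := proj1 (le_meet HB _ _ _) le.
have := H q0; rewrite !(RF_char _ ha r0) //= => /(_ lx) ly'.
by move/(atom_compl HB _ ha): ly.
Qed.

Lemma rep_ok : complete_rep_into RV RF.
Proof.
split; [|split; [|split; [|split; [|split; [|split]]]]].
- move=> q i j [a [w [ha ok h]]].
  case: (eqVneq i j) => [<-|ij].
  + exists a, w; split => // k. by rewrite tperm1 perm1.
  + exists a, ((i,j) :: w); split => //=; first by rewrite ij.
    move=> k. by rewrite h /= permM.
- exact: RF_V.
- move=> x y H. apply: le_antisym => //; apply: le_of_RF => q; apply H.
- move=> x y q; split.
  + move=> hf; have [a [w [ha ok h]]] := RF_V hf.
    move: hf; rewrite !(RF_char _ ha h ok). exact: (proj1 (le_meet HB _ _ _)).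
  + move=> [hf hg]; have [a [w [ha ok h]]] := RF_V hf.
    move: hf hg; rewrite !(RF_char _ ha h ok) => ??. by apply/le_meet.
- move=> x q; split.
  + move=> hf; have hv := RF_V hf; have [a [w [ha ok h]]] := hv.
    have hb := act_atom HS HP ok ha.
    move: hf; rewrite !(RF_char _ ha h ok) (atom_compl HB _ hb) //.
  + move=> [hv hf]; have [a [w [ha ok h]]] := hv.
    have hb := act_atom HS HP ok ha.
    move: hf; rewrite !(RF_char _ ha h ok) (atom_compl HB _ hb) //.
- move=> i j x q ij.
  have key q' : RV q' -> (RF (tsub i j x) q' <-> RF x (fun k => q' (tperm i j k))).
    move=> [a [w [ha ok h]]].
    have h' : rep a ((i,j)::w) (fun k => q' (tperm i j k)).
      by move=> k; rewrite h /= permM.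
    have ok' : word_ok ((i,j)::w) by rewrite /= ij.
    rewrite (RF_char _ ha h ok) (RF_char _ ha h' ok') /=.
    exact: (sub_adj HS HP _ _ ij).
  split.
  + move=> hf; have hv := RF_V hf. by split => //; apply/key.
  + by move=> [hv hf]; apply/key.
- move=> Y a [lb glb] q; split.
  + move=> hf; have hv := RF_V hf; have [c [w [hc ok h]]] := hv.
    split => // y Yy. move: hf; rewrite !(RF_char _ hc h ok) => le.
    exact: le_trans le (lb y Yy).
  + move=> [hv hy]; have [c [w [hc ok h]]] := hv.
    rewrite (RF_char _ hc h ok). apply: glb => y Yy.
    by rewrite -(RF_char _ hc h ok); apply: hy.
Qed.
End Rep.

Lemma le_refl n (A : tstruct n) (HB : boolean_axioms A) (x : A) : tle x x.
Proof. bax HB; exact: I. Qed.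

Lemma cr_atomic n (A : tstruct n) (HB : boolean_axioms A) :
  completely_representable A -> atomic A.
Proof.
move=> [U [V [f [_ [fV [inj [fm [fc [_ finf]]]]]]]]] x nzx.
apply: NNPP => nat.
have f0 : forall y q, ~ f (mt y (cp y)) q.
  by move=> y q; rewrite fm fc => -[h [_ h']].
have [q fxq] : exists q, f x q.
  apply: NNPP => nq; apply: nzx. apply: inj => q; split => h.
  - by exfalso; apply: nq; exists q.
  - by case: (f0 x q).
pose z := mt x (cp x).
have hinf : is_inf (fun y => f y q) z.
  split.
  - move=> y _; apply: zero_le => //; exact: zero_mc.
  - move=> b hb. apply: NNPP => nle.
    have nzb : ~ is_zero b by move=> hz; apply: nle; apply: zero_le.
    have bx : tle b x by apply: hb.
    have nab : ~ is_atom b by move=> ab; apply: nat; exists b.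
    have [c [cb [neq nzc]]] : exists c, tle c b /\ c <> b /\ ~ is_zero c.
      apply: NNPP => nc; apply: nab; split => // c cb.
      case: (classic (c = b)) => [e|ne]; first by left.
      right; apply: NNPP => nzc; apply: nc; exists c; tauto.
    case: (classic (f c q)) => [fcq|nfcq].
    + by apply: neq; apply: le_antisym => //; apply: hb.
    + have : f (cp c) q by rewrite fc; split => //; exact: fV fxq.
      move=> /hb bnc. apply: nzc. apply: (le_zero HB (z := mt c (cp c))); last exact: zero_mc.
      apply/le_meet => //; split; first exact: le_refl.
      exact: le_trans cb bnc.
have := proj2 (finf _ _ hinf q).
move=> h; apply: (f0 x q); apply: h; split; [exact: fV fxq | by []].
Qed.

Definition fimp n (p q : formula n) := FNot (FAnd p (FNot q)).
Definition f_or n (p q : formula n) := FNot (FAnd (FNot p) (FNot q)).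
Definition TJ n (a b : term n) := TCompl (TMeet (TCompl a) (TCompl b)).
Definition wt n (w : word n) (t : term n) : term n := foldr (fun p t => TSub p.1 p.2 t) t w.

Section Sent.
Variable n : nat.
Local Notation x := (TVar n 0).
Local Notation y := (TVar n 1).
Local Notation z := (TVar n 2).
Local Notation M := (@TMeet n).
Local Notation Cm := (@TCompl n).
Local Notation J := (@TJ n).
Local Notation "∀ k , p" := (FForall k p) (at level 200, k at level 0).

Definition BAax : seq (formula n) :=
 [:: ∀ 0, ∀ 1, FEq (M x y) (M y x);
     ∀ 0, ∀ 1, ∀ 2, FEq (M x (M y z)) (M (M x y) z);
     ∀ 0, FEq (M x x) x;
     ∀ 0, ∀ 1, FEq (J x y) (J y x);
     ∀ 0, ∀ 1, ∀ 2, FEq (J x (J y z)) (J (J x y) z);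
     ∀ 0, ∀ 1, FEq (M x (J x y)) x;
     ∀ 0, ∀ 1, FEq (J x (M x y)) x;
     ∀ 0, ∀ 1, ∀ 2, FEq (M x (J y z)) (J (M x y) (M x z));
     ∀ 0, FEq (Cm (Cm x)) x;
     ∀ 0, ∀ 1, FEq (M x (Cm x)) (M y (Cm y))].

Definition s1 (i j : 'I_n) : formula n := ∀ 0, ∀ 1, FEq (TSub i j (M x y)) (M (TSub i j x) (TSub i j y)).
Definition s2 (i j : 'I_n) : formula n := ∀ 0, FEq (TSub i j (Cm x)) (Cm (TSub i j x)).

Definition ATOM : formula n :=
  ∀ 0, FNot (FAnd (FNot (FEq x (M x (Cm x))))
     (∀ 1, FNot (FAnd
        (FAnd (FNot (FEq y (M y (Cm y))))
              (∀ 2, fimp (FEq (M z y) z) (f_or (FEq z y) (FEq z (M z (Cm z))))))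
        (FEq (M y x) y)))).

Lemma ATOM_ok (A : tstruct n) : (forall rho : nat -> A, sat rho ATOM) <-> atomic A.
Proof.
split.
- move=> h a nz. apply: NNPP => na. apply: (h (fun _ => a) a) => /=. split => // b [[nzb hc] le].
  apply: na; exists b; split => //; split => // c le'.
  have := hc c => /=. case: (classic (c = b)); case: (classic (is_zero c)); rewrite /is_zero; tauto.
- move=> h rho a /= [nz H]. have [b [[nzb hb] le]] := h a nz.
  apply: (H b). split => //. split => // c [le' nn]. apply: nn => -[h1 h2].
  by case: (hb c le').
Qed.
End Sent.

Lemma In_cat (T : Type) (l1 l2 : seq T) x : List.In x (l1 ++ l2) <-> List.In x l1 \/ List.In x l2.
Proof. elim: l1 => [|a l IH] /=; [tauto|rewrite IH; tauto]. Qed.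

Section Models.
Variables (n : nat) (A : tstruct n).

Lemma models_nil : models [::] A.
Proof. by []. Qed.

Lemma models_cons phi l : models (phi :: l) A <-> (forall rho : nat -> A, sat rho phi) /\ models l A.
Proof.
split.
- move=> h; split; first by apply: h; left.
  by move=> p hp; apply: h; right.
- move=> [h1 h2] p /= [<-|hp] //. exact: h2.
Qed.

Lemma models_cat l1 l2 : models (l1 ++ l2) A <-> models l1 A /\ models l2 A.
Proof.
split.
- by move=> h; split => p hp; apply: h; apply/In_cat; tauto.
- by move=> [h1 h2] p /In_cat [hp|hp]; [apply: h1|apply: h2].
Qed.

Lemma models_flat (T : eqType) (F : T -> seq (formula n)) (l : seq T) :
  models (flatten (map F l)) A <-> forall p, p \in l -> models (F p) A.
Proof.
elim: l => [|a l IH] /=.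
- by split => // _ p.
- rewrite models_cat IH. split.
  + move=> [h1 h2] p; rewrite in_cons => /orP[/eqP->|hp] //. exact: h2.
  + move=> h; split; first by apply: h; rewrite mem_head.
    by move=> p hp; apply: h; rewrite in_cons hp orbT.
Qed.

Lemma models_map (T : eqType) (g : T -> formula n) (l : seq T) :
  models (map g l) A <-> forall s, s \in l -> forall rho : nat -> A, sat rho (g s).
Proof.
elim: l => [|a l IH] /=.
- by split => // _ p.
- rewrite models_cons IH. split.
  + move=> [h1 h2] p; rewrite in_cons => /orP[/eqP->|hp] //. exact: h2.
  + move=> h; split; first by apply: h; rewrite mem_head.
    by move=> p hp; apply: h; rewrite in_cons hp orbT.
Qed.
End Models.

Lemma all_flat (T U : Type) (P : pred U) (F : T -> seq U) (l : seq T) :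
  (forall p, all P (F p)) -> all P (flatten (map F l)).
Proof. move=> h; elim: l => [|a l IH] //=. by rewrite all_cat h IH. Qed.

Lemma term_vars_wt n (w : word n) t : term_vars (wt w t) = term_vars t.
Proof. by elim: w => [|p w IH] //=. Qed.

Lemma teval_wt n (A : tstruct n) (rho : nat -> A) (w : word n) t :
  teval rho (wt w t) = word_act w (teval rho t).
Proof. by elim: w => [|p w IH] //=; rewrite IH. Qed.

Lemma word_perm_prod n (w : word n) : word_perm w = (\prod_(t <- w) tperm t.1 t.2)%g.
Proof. elim: w => [|p w IH] /=; first by rewrite big_nil. by rewrite big_cons IH. Qed.

Lemma exw n (s : {perm 'I_n}) : exists w : word n, word_ok w && (word_perm w == s).
Proof.
have [ts -> hts] := prod_tpermP s. exists ts. by rewrite word_perm_prod eqxx andbT.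
Qed.

Definition cw n (s : {perm 'I_n}) : word n := xchoose (exw s).

Lemma cwP n (s : {perm 'I_n}) : word_ok (cw s) /\ word_perm (cw s) = s.
Proof. have /andP[h1 /eqP h2] := xchooseP (exw s). by []. Qed.

Definition e3 n (i j : 'I_n) (s : {perm 'I_n}) : formula n :=
  FForall 0 (FEq (TSub i j (wt (cw s) (TVar n 0))) (wt (cw (tperm i j * s)%g) (TVar n 0))).
Definition e4 n : formula n := FForall 0 (FEq (wt (cw 1%g) (TVar n 0)) (TVar n 0)).
Definition FPair n (p : 'I_n * 'I_n) : seq (formula n) :=
  [:: s1 p.1 p.2, s2 p.1 p.2 & map (e3 p.1 p.2) (enum {: {perm 'I_n}})].
Definition pairs n : seq ('I_n * 'I_n) := [seq p <- enum {: 'I_n * 'I_n} | p.1 != p.2].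
Definition Gamma n : seq (formula n) :=
  BAax n ++ flatten (map (@FPair n) (pairs n)) ++ [:: e4 n; ATOM n].

Lemma Gamma_sent n : all (@sentence n) (Gamma n).
Proof.
rewrite /Gamma !all_cat. apply/and3P; split => //; last by rewrite /= /sentence /= term_vars_wt.
apply: all_flat => p. rewrite /FPair /= all_map. apply/allP => s _.
by rewrite /sentence /= !term_vars_wt.
Qed.

Lemma BA_ok n (A : tstruct n) : models (BAax n) A <-> boolean_axioms A.
Proof.
rewrite /BAax !models_cons. split.
- move=> [h1 [h2 [h3 [h4 [h5 [h6 [h7 [h8 [h9 [h10 _]]]]]]]]]].
  split; [move=> a b; exact: (h1 (fun _ => a) a b)|].
  split; [move=> a b c; exact: (h2 (fun _ => a) a b c)|].
  split; [move=> a; exact: (h3 (fun _ => a) a)|].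
  split; [move=> a b; exact: (h4 (fun _ => a) a b)|].
  split; [move=> a b c; exact: (h5 (fun _ => a) a b c)|].
  split; [move=> a b; exact: (h6 (fun _ => a) a b)|].
  split; [move=> a b; exact: (h7 (fun _ => a) a b)|].
  split; [move=> a b c; exact: (h8 (fun _ => a) a b c)|].
  split; [move=> a; exact: (h9 (fun _ => a) a)|].
  move=> a b; exact: (h10 (fun _ => a) a b).
- move=> [h1 [h2 [h3 [h4 [h5 [h6 [h7 [h8 [h9 h10]]]]]]]]].
  do 10 (split; [move=> rho; assumption|]). exact: models_nil.
Qed.

Lemma mem_pairs n (p : 'I_n * 'I_n) : (p \in pairs n) = (p.1 != p.2).
Proof. by rewrite mem_filter mem_enum andbT. Qed.

Lemma act_cw n (A : tstruct n)
  (HE3 : forall (i j : 'I_n) s (a : A), i != j ->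
     tsub i j (word_act (cw s) a) = word_act (cw (tperm i j * s)%g) a)
  (HE4 : forall a : A, word_act (cw 1%g) a = a) :
  forall w : word n, word_ok w -> forall a : A, word_act w a = word_act (cw (word_perm w)) a.
Proof.
elim => [|[i j] w IH] /=; first by move=> _ a; rewrite HE4.
move=> /andP[ij ok] a. by rewrite IH // HE3.
Qed.

Lemma Gamma_ok n (A : tstruct n) : models (Gamma n) A <-> in_TA A /\ atomic A.
Proof.
rewrite /Gamma !models_cat BA_ok models_flat !models_cons ATOM_ok.
have e4E : (forall rho : nat -> A, sat rho (e4 n)) <-> (forall a : A, word_act (cw 1%g) a = a).
  split => h.
  - move=> a; have := h (fun _ => a) a. by rewrite /= teval_wt.
  - by move=> rho a /=; rewrite teval_wt.
have FPE : forall p : 'I_n * 'I_n, models (FPair p) A <->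
   [/\ forall a b : A, tsub p.1 p.2 (tmeet a b) = tmeet (tsub p.1 p.2 a) (tsub p.1 p.2 b),
       forall a : A, tsub p.1 p.2 (tcompl a) = tcompl (tsub p.1 p.2 a) &
       forall s (a : A), tsub p.1 p.2 (word_act (cw s) a) = word_act (cw (tperm p.1 p.2 * s)%g) a].
  move=> p; rewrite /FPair !models_cons models_map. split.
  - move=> [h1 [h2 h3]]; split.
    + move=> a b; exact: (h1 (fun _ => a) a b).
    + move=> a; exact: (h2 (fun _ => a) a).
    + move=> s a; have := h3 s (mem_enum _ s) (fun _ => a) a. by rewrite /= !teval_wt.
  - move=> [h1 h2 h3]; split; first by move=> rho; exact: h1.
    split; first by move=> rho; exact: h2.
    by move=> s _ rho a /=; rewrite !teval_wt.
rewrite e4E. split.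
- move=> [HB [HF [H4 [Hat _]]]]; split => //.
  have HF' : forall i j : 'I_n, i != j -> _ := fun i j ij => proj1 (FPE (i, j)) (HF (i, j) (eq_ind_r is_true ij (mem_pairs (i, j)))).
  split => //.
  + move=> i j ij; have [h1 h2 _] := HF' i j ij. by split.
  + move=> w1 w2 ok1 ok2 ep a.
    have HE3 : forall (i j : 'I_n) s (a : A), i != j ->
       tsub i j (word_act (cw s) a) = word_act (cw (tperm i j * s)%g) a.
      by move=> i j s b ij; have [_ _ h3] := HF' i j ij; apply: h3.
    by rewrite (act_cw HE3 H4 ok1) (act_cw HE3 H4 ok2) ep.
- move=> [[HB HS HP] Hat]; split => //; split.
  + move=> p; rewrite mem_pairs => ij; apply/FPE; have [h1 h2] := HS _ _ ij.
    split => // s a.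
    have [ok1 e1] := cwP s; have [ok2 e2] := cwP (tperm p.1 p.2 * s)%g.
    have := HP ((p.1, p.2) :: cw s) (cw (tperm p.1 p.2 * s)%g).
    rewrite /= ij ok1 ok2 e1 e2 => /(_ isT isT erefl a). done.
  + split; last by split.
    move=> a; have [ok1 e1] := cwP (1%g : {perm 'I_n}).
    exact: (HP (cw 1%g) [::] ok1 isT e1 a).
Qed.

Lemma cr_iff n (hn : 2 <= n) (A : tstruct n) : in_TA A -> (completely_representable A <-> atomic A).
Proof.
move=> [HB HS HP]; split; first exact: cr_atomic.
move=> Hat. have hn0 : 0 < n by apply: leq_trans hn.
have := rep_ok hn0 HB HS HP Hat. move=> h. by do 3 eexists; exact: h.
Qed.

Theorem corollary3p24 (n : nat) (hn : 2 <= n) :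
  (exists Gamma : seq (formula n),
      all (@sentence n) Gamma /\
      forall A : tstruct n,
        models Gamma A <-> (in_TA A /\ completely_representable A)) /\
  (forall A : tstruct n, in_TA A -> (completely_representable A <-> atomic A)).
Proof.
split; last by move=> A; exact: cr_iff.
exists (Gamma n); split; first exact: Gamma_sent.
move=> A; rewrite Gamma_ok. split => -[h1 h2]; split => //; by apply/(cr_iff hn h1).
Qed.
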